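(* Let $G$ be a finite abelian group and let $k\in\mathbb{N}$ with \[k \ge \delta(G)\exp(G)|\mathcal{A}(G)|+ (\eta(G)- \mathsf{D}(G^-)).\] Then $\mathsf{D}_{k+1}(G)=\mathsf{D}_{k}(G)+\exp(G)$.
   Context: $G$ is written additively. A sequence over $G$ is an element of the (multiplicatively written) free abelian monoid $\mathcal{F}(G)$ over $G$, i.e. a finite unordered list of elements with repetitions; $|S|$ is the length, $\sigma(S)$ the sum of the terms. A zero-sum sequence has $\sigma(S)=0$; a minimal zero-sum sequence is a non-empty zero-sum sequence with no proper non-empty zero-sum subsequence. $\mathcal{A}(G)$ is the (finite) set of minimal zero-sum sequences over $G$. A factorization of a zero-sum sequence $B$ is a formal unordered product $A_1\cdot\ldots\cdot A_\ell$ of minimal zero-sum sequences with $A_1\cdots A_\ell=B$; factorizations are elements of the free abelian monoid $\mathsf{Z}(G)$ over $\mathcal{A}(G)$, $\pi:\mathsf{Z}(G)\to\mathcal{F}(G)$ evaluates the product, $|\zeta|$ is the number of factors, and $\mathsf{L}(B)$ (the set of lengths) is the set of lengths of factorizations of $B$. For $\zeta,\xi\in\mathsf{Z}(G)$, $\mathsf{d}(\zeta,\xi)=\max\{|\gcd(\zeta,\xi)^{-1}\zeta|,|\gcd(\zeta,\xi)^{-1}\xi|\}$. Two distinct $k,\ell\in \mathsf{L}(B)$ are adjacent lengths of $B$ if no element of $\mathsf{L}(B)$ lies strictly between them. For $\zeta\in\mathsf{Z}(G)$, $\delta(\zeta)$ is the smallest $m\in\mathbb{N}_0$ such that for every $k\in\mathbb{N}$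 for which $k$ and $|\zeta|$ are adjacent lengths of $\pi(\zeta)$ there is a factorization $\xi$ of $\pi(\zeta)$ with $|\xi|=k$ and $\mathsf{d}(\xi,\zeta)\le m$; $\delta(G)=\sup\{\delta(\zeta):\zeta\in\mathsf{Z}(G)\}$ (the successive distance, known to be finite). $\mathsf{D}_k(G)$ is the smallest $\ell$ such that every sequence of length at least $\ell$ has $k$ disjoint non-empty zero-sum subsequences; $\mathsf{D}(G)=\mathsf{D}_1(G)$. $\eta(G)$ is the smallest $\ell$ such that every sequence over $G$ of length at least $\ell$ has a non-empty zero-sum subsequence of length at most $\exp(G)$. $G^-$ denotes an abelian group with $G\cong G^-\oplus C_{\exp(G)}$. *)

(* Defs.v *)
From HB Require Import structures.
From mathcomp Require Import all_boot all_order all_algebra all_fingroup abelian.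
From Stdlib Require Import ClassicalEpsilon.
Set Implicit Arguments. Unset Strict Implicit. Unset Printing Implicit Defensive.
Import GRing.Theory.
Local Open Scope ring_scope.

(* A sequence over G (element of the free abelian monoid F(G)) is represented
   canonically by its multiplicity function. *)
Definition gseq (G : finZmodType) := {ffun G -> nat}.

Definition pbool (P : Prop) : bool :=
  if excluded_middle_informative P then true else false.

Section Defs.
Variable G : finZmodType.

Definition expG : nat := exponent [set: G].

Definition slen (S : gseq G) : nat := (\sum_(g : G) S g)%N.
Definition ssum (S : gseq G) : G := \sum_(g : G) g *+ S g.
Definition ssub (T S : gseq G) : bool := [forall g, (T g <= S g)%N].
Definition sprod (s : seq (gseq G)) : gseq G := [ffun g => (\sum_(A <- s) A g)%N].

Definition zero_sum (S : gseq G) : Prop := ssum S = 0.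

Definition minimal_zero_sum (A : gseq G) : Prop :=
  (0 < slen A)%N /\ zero_sum A /\
  forall T, ssub T A -> (0 < slen T)%N -> zero_sum T -> T = A.

(* |A(G)|: every minimal zero-sum sequence has all multiplicities <= |G|
   (each multiplicity is at most the order of the element), so A(G) is in
   bijection with the following finite set. *)
Definition card_atoms : nat :=
  #|[set f : {ffun G -> 'I_(#|G|.+1)} |
     pbool (minimal_zero_sum [ffun g => nat_of_ord (f g)]) ]|.

(* Factorizations: elements of Z(G), i.e. finite (unordered) lists of
   minimal zero-sum sequences; order is irrelevant for every notion below. *)
Definition is_factorization (z : seq (gseq G)) : Prop :=
  forall A, A \in z -> minimal_zero_sum A.

Definition factorization_of (z : seq (gseq G)) (B : gseq G) : Prop :=
  is_factorization z /\ sprod z = B.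

Definition in_lengths (B : gseq G) (l : nat) : Prop :=
  exists z, factorization_of z B /\ size z = l.

Definition gcd_size (z x : seq (gseq G)) : nat :=
  (\sum_(A <- undup (z ++ x)) minn (count_mem A z) (count_mem A x))%N.

Definition fdist (z x : seq (gseq G)) : nat :=
  maxn (size z - gcd_size z x) (size x - gcd_size z x).

Definition adjacent_lengths (B : gseq G) (k l : nat) : Prop :=
  k <> l /\ in_lengths B k /\ in_lengths B l /\
  forall m, (minn k l < m < maxn k l)%N -> ~ in_lengths B m.

(* delta(z) <= m  (the defining property of delta(z), monotone in m) *)
Definition delta_le (z : seq (gseq G)) (m : nat) : Prop :=
  forall k, adjacent_lengths (sprod z) k (size z) ->
    exists x, factorization_of x (sprod z) /\ size x = k /\ (fdist x z <= m)%N.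

(* dG = delta(G) = sup_z delta(z): dG is the least m with delta(z) <= m
   for all z in Z(G). *)
Definition is_succ_dist (dG : nat) : Prop :=
  (forall z, is_factorization z -> delta_le z dG) /\
  forall m, (forall z, is_factorization z -> delta_le z m) -> (dG <= m)%N.

Definition has_k_disjoint_zs (k : nat) (S : gseq G) : Prop :=
  exists Ts : seq (gseq G), size Ts = k /\
    (forall T, T \in Ts -> (0 < slen T)%N /\ zero_sum T) /\
    ssub (sprod Ts) S.

Definition is_Dk (k dk : nat) : Prop :=
  (forall S, (dk <= slen S)%N -> has_k_disjoint_zs k S) /\
  forall l, (forall S, (l <= slen S)%N -> has_k_disjoint_zs k S) -> (dk <= l)%N.

Definition has_short_zs (S : gseq G) : Prop :=
  exists T, ssub T S /\ (0 < slen T <= expG)%N /\ zero_sum T.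

Definition is_eta (e : nat) : Prop :=
  (forall S, (e <= slen S)%N -> has_short_zs S) /\
  forall l, (forall S, (l <= slen S)%N -> has_short_zs S) -> (e <= l)%N.

End Defs.

(* H is a possible G^-: G is isomorphic to H (+) C_exp(G);
   C_n is realised as 'I_(n.-1).+1 (n = exp(G) >= 1). *)
Definition is_Gminus (G H : finZmodType) : Prop :=
  exists f : {additive (H * 'I_(expG G).-1.+1)%type -> G}, bijective f.

(* Main.v *)
Require Import Defs.
From HB Require Import structures.
From mathcomp Require Import all_boot all_order all_algebra all_fingroup abelian.
From Stdlib Require Import Classical ClassicalEpsilon.
From mathcomp Require Import zify.
Set Implicit Arguments. Unset Strict Implicit. Unset Printing Implicit Defensive.
Import GRing.Theory.

Definition sadd {G : finZmodType} (S T : gseq G) : gseq G := [ffun g => S g + T g].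
Definition sdiff {G : finZmodType} (S T : gseq G) : gseq G := [ffun g => S g - T g].
Definition sone {G : finZmodType} (x : G) : gseq G := [ffun g => nat_of_bool (g == x)].
Definition szero {G : finZmodType} : gseq G := [ffun _ => 0].

Lemma ssubP {G : finZmodType} (T S : gseq G) : reflect (forall g, T g <= S g) (ssub T S).
Proof. exact: forallP. Qed.

Lemma slen_add {G : finZmodType} (S T : gseq G) : slen (sadd S T) = slen S + slen T.
Proof. rewrite /slen -big_split /=; apply: eq_bigr => g _; by rewrite ffunE. Qed.

Lemma ssum_add {G : finZmodType} (S T : gseq G) : ssum (sadd S T) = (ssum S + ssum T)%R.
Proof. rewrite /ssum -big_split /=; apply: eq_bigr => g _; by rewrite ffunE mulrnDr. Qed.

Lemma sadd_diff {G : finZmodType} (S T : gseq G) : ssub T S -> sadd T (sdiff S T) = S.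
Proof. move/ssubP=> h; apply/ffunP=> g; rewrite !ffunE subnKC //. Qed.

Lemma slen_diff {G : finZmodType} (S T : gseq G) : ssub T S -> slen (sdiff S T) = slen S - slen T.
Proof. move=> h; rewrite -{2}(sadd_diff h) slen_add; lia. Qed.

Lemma ssum_diff {G : finZmodType} (S T : gseq G) : ssub T S -> zero_sum S -> zero_sum T -> zero_sum (sdiff S T).
Proof. move=> h; rewrite /zero_sum -{1}(sadd_diff h) ssum_add => hS hT.
by move: hS; rewrite hT add0r. Qed.

Lemma sprod_nil {G : finZmodType} : sprod [::] = (szero : gseq G).
Proof. apply/ffunP=> g; by rewrite !ffunE big_nil. Qed.

Lemma sprod_cons {G : finZmodType} (A : gseq G) s : sprod (A :: s) = sadd A (sprod s).
Proof. apply/ffunP=> g; by rewrite !ffunE big_cons. Qed.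

Lemma sprod_cat {G : finZmodType} (s1 s2 : seq (gseq G)) : sprod (s1 ++ s2) = sadd (sprod s1) (sprod s2).
Proof. apply/ffunP=> g; by rewrite !ffunE big_cat. Qed.

Lemma slen_szero {G : finZmodType} : slen (szero : gseq G) = 0.
Proof. rewrite /slen big1 // => g _; by rewrite ffunE. Qed.

Lemma ssum_szero {G : finZmodType} : ssum (szero : gseq G) = 0%R.
Proof. rewrite /ssum big1 // => g _; by rewrite ffunE. Qed.

Lemma slen_sprod {G : finZmodType} (s : seq (gseq G)) : slen (sprod s) = \sum_(A <- s) slen A.
Proof. elim: s => [|A s IH]; first by rewrite sprod_nil slen_szero big_nil.
by rewrite sprod_cons slen_add IH big_cons. Qed.

Lemma ssum_sprod {G : finZmodType} (s : seq (gseq G)) : ssum (sprod s) = (\sum_(A <- s) ssum A)%R.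
Proof. elim: s => [|A s IH]; first by rewrite sprod_nil ssum_szero big_nil.
by rewrite sprod_cons ssum_add IH big_cons. Qed.

Lemma slen_le {G : finZmodType} (T S : gseq G) : ssub T S -> slen T <= slen S.
Proof. move=> h; rewrite -(sadd_diff h) slen_add; lia. Qed.

Lemma slen0 {G : finZmodType} (S : gseq G) : slen S = 0 -> S = szero.
Proof. move=> h; apply/ffunP=> g; rewrite ffunE.
have : S g <= slen S by rewrite /slen (bigD1 g) //=; exact: leq_addr.
rewrite h leqn0 => /eqP; done. Qed.

Lemma ssub_eq {G : finZmodType} (T S : gseq G) : ssub T S -> slen S <= slen T -> T = S.
Proof. move=> h hl; have := slen_diff h; have e : slen (sdiff S T) = 0 by rewrite slen_diff //; lia.
move/slen0: e => e _. rewrite -(sadd_diff h) e; apply/ffunP=> g; by rewrite !ffunE addn0. Qed.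

Lemma ssub_refl {G : finZmodType} (S : gseq G) : ssub S S.
Proof. by apply/ssubP. Qed.

Lemma ssub_trans {G : finZmodType} (S T U : gseq G) : ssub S T -> ssub T U -> ssub S U.
Proof. move=> /ssubP h1 /ssubP h2; apply/ssubP=> g; exact: leq_trans (h1 g) (h2 g). Qed.

Lemma ssub_addr {G : finZmodType} (S T : gseq G) : ssub S (sadd S T).
Proof. apply/ssubP=> g; rewrite ffunE; lia. Qed.

Lemma ssub_addl {G : finZmodType} (S T : gseq G) : ssub T (sadd S T).
Proof. apply/ssubP=> g; rewrite ffunE; lia. Qed.

Lemma ssub_add2 {G : finZmodType} (S T S' T' : gseq G) : ssub S S' -> ssub T T' -> ssub (sadd S T) (sadd S' T').
Proof. move=> /ssubP h1 /ssubP h2; apply/ssubP=> g; rewrite !ffunE; exact: leq_add. Qed.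

Lemma slen_sone {G : finZmodType} (x : G) : slen (sone x) = 1.
Proof. rewrite /slen (bigD1 x) //= big1 => [|g /negbTE hg]; rewrite ffunE ?eqxx ?hg //. Qed.

Lemma ssum_sone {G : finZmodType} (x : G) : ssum (sone x) = x.
Proof. rewrite /ssum (bigD1 x) //= big1 => [|g /negbTE hg]; rewrite ffunE ?eqxx ?hg ?addr0 //. Qed.

Lemma sprod_perm {G : finZmodType} (s1 s2 : seq (gseq G)) : perm_eq s1 s2 -> sprod s1 = sprod s2.
Proof. move=> h; apply/ffunP=> g; rewrite !ffunE; exact: perm_big. Qed.

Lemma ssub_sprod_take {G : finZmodType} (s : seq (gseq G)) n : ssub (sprod (take n s)) (sprod s).
Proof. rewrite -{2}(cat_take_drop n s) sprod_cat; exact: ssub_addr. Qed.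

Lemma hk_mono_k {G : finZmodType} j j' (S : gseq G) :
  has_k_disjoint_zs j S -> j' <= j -> has_k_disjoint_zs j' S.
Proof. move=> [Ts [hs [hT hsub]]] hj; exists (take j' Ts); split.
  by rewrite size_take hs; case: ltngtP hj; lia.
split; first by move=> T /mem_take; exact: hT.
exact: ssub_trans (ssub_sprod_take _ _) hsub. Qed.

Lemma hk_mono_S {G : finZmodType} j (S S' : gseq G) :
  has_k_disjoint_zs j S -> ssub S S' -> has_k_disjoint_zs j S'.
Proof. move=> [Ts [hs [hT hsub]]] h; exists Ts; do 2!split => //; exact: ssub_trans hsub h. Qed.

Lemma hk_cons {G : finZmodType} j (S T : gseq G) :
  0 < slen T -> zero_sum T -> ssub T S -> has_k_disjoint_zs j (sdiff S T) ->
  has_k_disjoint_zs j.+1 S.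
Proof. move=> h1 h2 h3 [Ts [hs [hT hsub]]]; exists (T :: Ts); split; first by rewrite /= hs.
split; first by move=> U; rewrite inE => /orP [/eqP -> //|]; exact: hT.
rewrite sprod_cons -(sadd_diff h3); apply: ssub_add2 => //; exact: ssub_refl. Qed.

Lemma hk_0 {G : finZmodType} (S : gseq G) : has_k_disjoint_zs 0 S.
Proof. exists [::]; split=> //; split=> //; rewrite sprod_nil; apply/ssubP=> g; by rewrite ffunE. Qed.

Lemma hk_remove {G : finZmodType} j (S : gseq G) x :
  has_k_disjoint_zs j.+1 (sadd S (sone x)) -> has_k_disjoint_zs j S.
Proof.
move=> [Ts [hs [hT /ssubP hsub]]].
case: (boolP (has (fun T : gseq G => 0 < T x) Ts)) => [/hasP [T TTs Tx]|hn].
  exists (rem T Ts); split; first by rewrite size_rem // hs.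
  split; first by move=> U /mem_rem; exact: hT.
  apply/ssubP=> g; have := hsub g; rewrite (sprod_perm (perm_to_rem TTs)) sprod_cons !ffunE.
  case: (eqVneq g x) => [->|]; lia.
exists (behead Ts); split; first by rewrite size_behead hs.
split; first by move=> U /mem_behead; exact: hT.
apply/ssubP=> g; have := hsub g.
have hb : sprod Ts = sadd (head szero Ts) (sprod (behead Ts)).
  by case: Ts hs {hT hsub hn} => // A s _; rewrite sprod_cons.
have h0 : sprod Ts x = 0.
  rewrite ffunE big_seq big1 // => U UTs; move/hasPn: hn => /(_ U UTs); lia.
rewrite hb !ffunE; case: (eqVneq g x) => [e|]; last lia.
move: h0; rewrite hb e !ffunE; lia. Qed.

Lemma hk_complement {G : finZmodType} j (S B : gseq G) :
  zero_sum B -> has_k_disjoint_zs j S -> ssub S B -> slen S < slen B ->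
  has_k_disjoint_zs j.+1 B.
Proof.
move=> zB [Ts [hs [hT hsub]]] hSB hl.
have hPB := ssub_trans hsub hSB.
have zP : zero_sum (sprod Ts).
  rewrite /zero_sum ssum_sprod big_seq big1 // => T /hT []; done.
exists (sdiff B (sprod Ts) :: Ts); split; first by rewrite /= hs.
split.
  move=> U; rewrite inE => /orP [/eqP ->|]; last exact: hT.
  split; last exact: ssum_diff.
  rewrite slen_diff //; have := slen_le hsub; lia.
rewrite sprod_cons.
have -> : sadd (sdiff B (sprod Ts)) (sprod Ts) = B.
  apply/ffunP=> g; move/ssubP: hPB => /(_ g); rewrite !ffunE; exact: subnK.
exact: ssub_refl. Qed.

Lemma atom_exists {G : finZmodType} (B : gseq G) :
  0 < slen B -> zero_sum B -> exists A, minimal_zero_sum A /\ ssub A B.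
Proof.
move: {2}(slen B) (leqnn (slen B)) => n; elim: n B => [|n IH] B hn hB zB; first lia.
case: (classic (minimal_zero_sum B)) => hm; first by exists B; split => //; exact: ssub_refl.
have [T [TB [T0 [zT TnB]]]] : exists T, ssub T B /\ 0 < slen T /\ zero_sum T /\ T <> B.
  apply: NNPP => hn'; apply: hm; split => //; split => // T h1 h2 h3.
  apply: NNPP => h4; apply: hn'; by exists T.
have hlt : slen T < slen B.
  have := slen_le TB; case: ltngtP => // e _; by case: TnB; apply: ssub_eq TB _; rewrite e.
have [A [hA AT]] := IH T ltac:(lia) T0 zT.
exists A; split => //; exact: ssub_trans AT TB. Qed.

Lemma fact_exists {G : finZmodType} (B : gseq G) :
  zero_sum B -> exists z, factorization_of z B /\ (0 < slen B -> 0 < size z).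
Proof.
move: {2}(slen B) (leqnn (slen B)) => n; elim: n B => [|n IH] B hn zB.
  exists [::]; split; last by move=> h; lia.
  split; first by [].
  have e : B = szero by apply: slen0; lia.
  by rewrite sprod_nil e.
case: (posnP (slen B)) => hB.
  exists [::]; split; last by [].
  by split => //; rewrite sprod_nil (slen0 hB).
have [A [hA AB]] := atom_exists hB zB.
have hA0 : 0 < slen A by case: hA.
have zA : zero_sum A by case: hA => _ [].
have [z [[hz ez] _]] := IH (sdiff B A) ltac:(rewrite slen_diff //; lia) (ssum_diff AB zB zA).
exists (A :: z); split => //; split.
  by move=> U; rewrite inE => /orP [/eqP ->|]; [|exact: hz].
by rewrite sprod_cons ez sadd_diff. Qed.

Lemma fact_of_hk {G : finZmodType} j (B : gseq G) :
  zero_sum B -> has_k_disjoint_zs j B -> exists z, factorization_of z B /\ j <= size z.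
Proof.
elim: j B => [|j IH] B zB hk.
  have [z [hz _]] := fact_exists zB; by exists z.
move: hk => [[|T Ts] [//= [hs] [hT hsub]]].
have [T0 zT] := hT T (mem_head _ _).
have hsub' := hsub; rewrite sprod_cons in hsub'.
have TB : ssub T B := ssub_trans (ssub_addr _ _) hsub'.
have hk' : has_k_disjoint_zs j (sdiff B T).
  exists Ts; split => //; split; first by move=> U h; apply: hT; rewrite inE h orbT.
  apply/ssubP=> g; move/ssubP: hsub' => /(_ g); rewrite !ffunE; lia.
have [z [[hz ez] hj]] := IH _ (ssum_diff TB zB zT) hk'.
have [zT' [[hzT ezT] hsT]] := fact_exists zT.
exists (zT' ++ z); split; last by rewrite size_cat; have := hsT T0; lia.
split; first by move=> U; rewrite mem_cat => /orP [/hzT|/hz].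
by rewrite sprod_cat ezT ez sadd_diff. Qed.

Lemma hk_of_fact {G : finZmodType} z (B : gseq G) :
  factorization_of z B -> has_k_disjoint_zs (size z) B.
Proof. move=> [hz ez]; exists z; split => //; split; last by rewrite ez; exact: ssub_refl.
move=> T /hz [h1 [h2 _]]; by split. Qed.

Lemma fact_size_le {G : finZmodType} z (B : gseq G) :
  factorization_of z B -> size z <= slen B.
Proof. move=> [hz <-]; rewrite slen_sprod -sum1_size big_seq [X in _ <= X]big_seq.
apply: leq_sum => A /hz [h _]; exact: h. Qed.

Lemma atom_mult_le {G : finZmodType} (A : gseq G) g :
  minimal_zero_sum A -> A g <= #|G|.
Proof.
move=> [A0 [zA hA]]; rewrite leqNgt; apply/negP => hlt.
pose T : gseq G := [ffun x => (x == g) * #|G|].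
have TA : ssub T A.
  apply/ssubP=> x; rewrite ffunE; case: (eqVneq x g) => [->|]; lia.
have T0 : 0 < slen T.
  rewrite /slen (bigD1 g) //= ffunE eqxx mul1n; have : 0 < #|G| by apply/card_gt0P; exists g.
  lia.
have zT : zero_sum T.
  rewrite /zero_sum /ssum (bigD1 g) //= big1 => [|x /negbTE hx]; last by rewrite ffunE hx mul0n.
  rewrite ffunE eqxx mul1n addr0.
  have := @cyclic.expg_cardG _ [set: G]%G g (in_setT g).
  rewrite FinRing.zmodXgE cardsT => ->; done.
have e := hA T TA T0 zT.
move: hlt; rewrite -e ffunE eqxx mul1n ltnn; done. Qed.

Lemma hk_pos {G : finZmodType} j (S : gseq G) : has_k_disjoint_zs j.+1 S -> 0 < slen S.
Proof. move=> [[|T Ts] [//= _ [hT hsub]]].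
have [T0 _] := hT T (mem_head _ _); rewrite sprod_cons in hsub.
have := slen_le (ssub_trans (ssub_addr _ _) hsub); lia. Qed.

Lemma eta_hk {G : finZmodType} eta : is_eta G eta ->
  forall j (S : gseq G), eta + j * expG G <= slen S -> has_k_disjoint_zs j.+1 S.
Proof.
move=> [he _]; elim=> [|j IH] S hS.
  have [T [TS [/andP [T0 Te] zT]]] := he S ltac:(lia).
  apply: (hk_cons T0 zT TS); exact: hk_0.
have [T [TS [/andP [T0 Te] zT]]] := he S ltac:(lia).
apply: (hk_cons T0 zT TS); apply: IH; rewrite slen_diff //; lia. Qed.

Lemma upper_bound {G : finZmodType} k Dk Dk1 eta :
  is_Dk G k Dk -> is_Dk G k.+1 Dk1 -> is_eta G eta -> eta <= Dk + expG G ->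
  Dk1 <= Dk + expG G.
Proof.
move=> [hk _] [_ hmin] he hle; apply: hmin => S hS.
have [T [TS [/andP [T0 Te] zT]]] := he.1 S ltac:(lia).
apply: (hk_cons T0 zT TS); apply: hk; rewrite slen_diff //; lia. Qed.

Lemma Dk_pos {G : finZmodType} k Dk : is_Dk G k.+1 Dk -> 0 < Dk.
Proof. move=> [h _]; case: (posnP Dk) => // e.
have := hk_pos (h szero ltac:(lia)); by rewrite slen_szero. Qed.

Lemma Dk_witness {G : finZmodType} k Dk : is_Dk G k.+1 Dk ->
  exists S : gseq G, Dk - 1 <= slen S /\ ~ has_k_disjoint_zs k.+1 S.
Proof. move=> hD; have hp := Dk_pos hD; move: hD => [_ hmin].
apply: NNPP => hn.
have : Dk <= Dk - 1; last lia.
apply: hmin => S hS; apply: NNPP => hS'; apply: hn; by exists S.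
Qed.

Lemma sum_const_seq_ge {T : eqType} (s : seq T) (F : T -> nat) c :
  (forall x, x \in s -> c <= F x) -> size s * c <= \sum_(x <- s) F x.
Proof. elim: s => [|x s IH] h; first by rewrite big_nil.
rewrite big_cons /= mulSn; apply: leq_add; first by apply: h; rewrite inE eqxx.
apply: IH => y hy; apply: h; by rewrite inE hy orbT. Qed.

Lemma snd_sum {A B : zmodType} (I : finType) (F : I -> A * B) :
  ((\sum_i F i).2 = (\sum_i (F i).2))%R.
Proof. exact: (big_morph (@snd A B) (fun _ _ => erefl) erefl). Qed.

Lemma fst_sum {A B : zmodType} (I : finType) (F : I -> A * B) :
  ((\sum_i F i).1 = (\sum_i (F i).1))%R.
Proof. exact: (big_morph (@fst A B) (fun _ _ => erefl) erefl). Qed.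

Lemma fst_mulrn {A B : zmodType} (x : A * B) n : ((x *+ n).1 = x.1 *+ n)%R.
Proof. elim: n => // n IH. by rewrite !mulrS /= IH. Qed.
Lemma snd_mulrn {A B : zmodType} (x : A * B) n : ((x *+ n).2 = x.2 *+ n)%R.
Proof. elim: n => // n IH. by rewrite !mulrS /= IH. Qed.

Lemma big_pair (R : Type) (idx : R) (op : Monoid.com_law idx) (I J : finType) (H : I * J -> R) :
  \big[op/idx]_p H p = \big[op/idx]_i \big[op/idx]_j H (i, j).
Proof. rewrite pair_bigA; apply: eq_bigr => -[]. done. Qed.

Lemma Dk_lower (G Gm : finZmodType) k Dk DGm : 0 < k -> is_Gminus G Gm ->
  is_Dk Gm 1 DGm -> is_Dk G k Dk -> DGm + k * expG G <= Dk + 1.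
Proof.
move=> k0 [f fbij] hDm hDk.
set e := expG G.
have e0 : 0 < e := exponent_gt0 _.
have ke0 : 0 < k * e by rewrite muln_gt0 k0.
have [T [hT hnT]] := Dk_witness hDm.
have DGm0 := Dk_pos hDm.
have Tfree : forall U, ssub U T -> 0 < slen U -> ~ zero_sum U.
  move=> U UT U0 zU; apply: hnT; exists [:: U]; split => //; split.
    by move=> V; rewrite inE => /eqP ->.
  rewrite sprod_cons sprod_nil; apply/ssubP=> a; move/ssubP: UT => /(_ a); rewrite !ffunE; lia.
have T0 : T 0%R = 0.
  case: (posnP (T 0%R)) => // hp; exfalso; apply: (Tfree (sone 0%R)).
  - apply/ssubP=> a; rewrite ffunE; case: (eqVneq a 0%R) => [->|] /=; lia.
  - by rewrite slen_sone.
  - by rewrite /zero_sum ssum_sone.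
have [finv fK finvK] := fbij.
have finj : injective f := bij_inj fbij.
pose c : 'I_(e.-1).+1 := inZp 1.
pose g := f (0%R, c).
pose S : gseq G := [ffun x => (x == g) * (k*e - 1) + ((finv x).2 == 0%R) * T (finv x).1].
have Sf : forall p, S (f p) = (f p == g) * (k*e - 1) + (p.2 == 0%R) * T p.1.
  by move=> p; rewrite ffunE fK.
have Sg : S g = k * e - 1.
  rewrite /g Sf eqxx /=; case: (c == 0%R) => /=; rewrite ?T0; lia.
have sumf : forall (F : G -> nat), \sum_x F x = \sum_p F (f p).
  move=> F; exact: (reindex f (onW_bij _ fbij)).
have sumfG : forall (F : G -> G), (\sum_x F x = \sum_p F (f p))%R.
  move=> F; exact: (reindex f (onW_bij _ fbij)).
have slenS : slen S = k * e - 1 + slen T.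
  rewrite /slen sumf; under eq_bigr do rewrite Sf.
  rewrite big_split /=.
  have -> : \sum_p (f p == g) * (k*e-1) = k*e-1.
    rewrite (bigD1 (0%R, c)) //= eqxx mul1n big1 ?addn0 // => p hp.
    by rewrite /g (inj_eq finj) (negbTE hp).
  congr (_ + _); rewrite -(pair_bigA _ (fun a (b : 'I_(e.-1).+1) => (b == 0%R) * T a)) /=.
  apply: eq_bigr => a _.
  rewrite (bigD1 0%R) //= mul1n big1 ?addn0 // => b /negbTE ->; done.
have key : forall U, ssub U S -> 0 < slen U -> zero_sum U -> e <= U g.
  move=> U /ssubP US U0 zU.
  have Uf : forall p, U (f p) <= S (f p) := fun p => US (f p).
  have hterm : forall p, f p != g -> p.2 != 0%R -> U (f p) = 0.
    move=> p h1 h2; have := Uf p; rewrite Sf (negbTE h1) (negbTE h2) /=; lia.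
  have hP : (\sum_(p : Gm * 'I_(e.-1).+1) p *+ U (f p) = 0)%R.
    apply: finj; rewrite raddf0 raddf_sum.
    under eq_bigr do rewrite raddfMn.
    rewrite -(sumfG (fun x => x *+ U x)%R); exact: zU.
  have hg2 : (c *+ U g = 0)%R.
    have := congr1 snd hP; rewrite snd_sum /= => h.
    move: h; rewrite (bigD1 (0%R,c)) //= big1 ?addr0 ?snd_mulrn //.
    move=> p hp; have hfp : f p != g by rewrite /g (inj_eq finj).
    rewrite snd_mulrn; case: (eqVneq p.2 0%R) => [-> |h2]; first by rewrite mul0rn.
    by rewrite hterm // mulr0n.
  have hdiv : e %| U g.
    move: hg2; rewrite Zp_mulrn => /(congr1 val) /=.
    rewrite prednK // modnMml mul1n => h; by rewrite /dvdn h.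
  have Ug0 : 0 < U g.
    case: (posnP (U g)) => // hg0; exfalso.
    pose U' : gseq Gm := [ffun a => U (f (a, 0%R))].
    have hterm' : forall p, p.2 != 0%R -> U (f p) = 0.
      move=> p h2; case: (eqVneq (f p) g) => [->|h1] //; exact: hterm.
    apply: (Tfree U').
    - apply/ssubP=> a; rewrite ffunE; have := Uf (a, 0%R); rewrite Sf eqxx /=.
      case: (eqVneq (f (a, 0%R)) g) => [->|_]; rewrite ?hg0 /=; lia.
    - move: U0; rewrite /slen sumf big_pair; congr (0 < _); apply: eq_bigr => a _.
      rewrite (bigD1 0%R) //= big1 ?addn0 ?ffunE // => b hb; exact: hterm'.
    - have := congr1 fst hP; rewrite fst_sum /= => h.
      rewrite /zero_sum /ssum -[RHS]h [RHS]big_pair; apply: eq_bigr => a _.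
      rewrite (bigD1 0%R) //= big1 ?addr0 ?ffunE ?fst_mulrn // => b hb.
      by rewrite fst_mulrn hterm' // mulr0n.
  exact: dvdn_leq.
have nhk : ~ has_k_disjoint_zs k S.
  move=> [Ts [hs [hTs hsub]]].
  have h1 : size Ts * e <= sprod Ts g.
    rewrite ffunE; apply: sum_const_seq_ge => U UTs.
    have [U0 zU] := hTs U UTs.
    apply: key => //; apply: ssub_trans hsub.
    rewrite (sprod_perm (perm_to_rem UTs)) sprod_cons; exact: ssub_addr.
  move/ssubP: hsub => /(_ g); rewrite Sg; move: h1; rewrite hs; lia.
have : slen S < Dk.
  rewrite ltnNge; apply/negP => h; exact: nhk (hDk.1 S h).
rewrite slenS; lia.
Qed.

Lemma pboolP (P : Prop) : pbool P = true <-> P.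
Proof. rewrite /pbool; case: excluded_middle_informative => h; split => //. Qed.

Lemma sum_count_cover {T : eqType} (u s : seq T) :
  uniq u -> {subset s <= u} -> \sum_(x <- u) count_mem x s = size s.
Proof.
move=> hu; elim: s => [|a s IH] hs; first by rewrite big1 // => x _.
rewrite /= -IH; last by move=> y hy; apply: hs; rewrite inE hy orbT.
rewrite (eq_bigr (fun x => (a == x) + count_mem x s)) // big_split /= -add1n; congr (_ + _).
have au : a \in u by apply: hs; rewrite inE eqxx.
rewrite (bigD1_seq a) //= eqxx big1_seq ?addn0 // => x /andP [hx _].
by rewrite eq_sym (negbTE hx). Qed.

Lemma undup_atoms_card {G : finZmodType} (s : seq (gseq G)) :
  (forall A, A \in s -> minimal_zero_sum A) -> size (undup s) <= card_atoms G.
Proof.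
move=> hs.
pose enc (A : gseq G) : {ffun G -> 'I_(#|G|.+1)} := [ffun g => inord (A g)].
have dec : forall A, minimal_zero_sum A -> [ffun g => nat_of_ord (enc A g)] = A.
  move=> A hA; apply/ffunP=> g; rewrite !ffunE inordK //; rewrite ltnS; exact: atom_mult_le.
rewrite -(size_map enc) /card_atoms cardE; apply: uniq_leq_size.
  rewrite map_inj_in_uniq ?undup_uniq // => A B; rewrite !mem_undup => hA hB e.
  by rewrite -(dec A (hs A hA)) -(dec B (hs B hB)) e.
move=> y /mapP [A hA ->]; rewrite mem_enum inE; apply/pboolP.
by rewrite dec //; apply: hs; rewrite -mem_undup.
Qed.

Lemma atom_pigeon {G : finZmodType} (s : seq (gseq G)) d :
  (forall A, A \in s -> minimal_zero_sum A) -> 0 < size s -> d * card_atoms G <= size s ->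
  exists A, A \in s /\ d <= count_mem A s.
Proof.
move=> hs s0 hd; apply: NNPP => hn.
have hlt : forall A, A \in undup s -> count_mem A s <= d.-1.
  move=> A; rewrite mem_undup => hA; case: (ltnP (count_mem A s) d) => h; first lia.
  by exfalso; apply: hn; exists A.
have sub : {subset s <= undup s} by move=> x; rewrite mem_undup.
have e1 := sum_count_cover (undup_uniq s) sub.
have h2 : \sum_(x <- undup s) count_mem x s <= size (undup s) * d.-1.
  rewrite -sum1_size big_distrl /= big_seq [X in _ <= X]big_seq; apply: leq_sum => x hx.
  rewrite mul1n; exact: hlt.
have h3 := undup_atoms_card hs.
have [A hA] : exists A, A \in s by case: s s0 {hs hd hn hlt sub e1 h2 h3} => // a s _; exists a; rewrite inE eqxx.
have h4 : 0 < size (undup s).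
  rewrite lt0n size_eq0; apply/eqP => e; by rewrite -mem_undup e in hA.
rewrite e1 in h2.
have : d * card_atoms G <= card_atoms G * d.-1 := leq_trans hd (leq_trans h2 (leq_mul h3 (leqnn _))).
case: d hn hlt hd h2 => [|d] hn hlt hd h2; last by rewrite mulnC /=; nia.
by exfalso; apply: hn; exists A.
Qed.

Lemma gcd_bound {G : finZmodType} (x z : seq (gseq G)) A :
  A \in z -> A \notin x -> gcd_size x z + count_mem A z <= size z.
Proof.
move=> Az Ax; rewrite /gcd_size.
set u := undup (x ++ z).
have uu : uniq u := undup_uniq _.
have Au : A \in u by rewrite mem_undup mem_cat Az orbT.
have cov : {subset z <= u} by move=> y hy; rewrite mem_undup mem_cat hy orbT.
rewrite -(sum_count_cover uu cov) (bigD1_seq A) //= [X in _ <= X](bigD1_seq A) //=.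
have -> : count_mem A x = 0 by apply/eqP; rewrite -leqn0 leqNgt -has_count has_pred1.
rewrite min0n add0n addnC leq_add2l; apply: leq_sum => y _; exact: geq_minr. Qed.

Lemma delta_step {G : finZmodType} dG (z : seq (gseq G)) B A m :
  is_succ_dist G dG -> factorization_of z B -> size z = m ->
  (forall x, factorization_of x B -> size x <= m) -> minimal_zero_sum A ->
  dG <= count_mem A z ->
  forall x, factorization_of x (sadd A B) -> size x <= m.+1.
Proof.
move=> hd [hz ez] hm hmax hA hc x0 hx0.
rewrite leqNgt; apply/negP => hlt.
set z' := A :: z.
have ez' : sprod z' = sadd A B by rewrite sprod_cons ez.
have hz' : is_factorization z' by move=> U; rewrite inE => /orP [/eqP ->|/hz].
pose P l := pbool (in_lengths (sadd A B) l /\ m.+1 < l).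
have exP : exists l, P l by exists (size x0); apply/pboolP; split => //; by exists x0.
case: (ex_minnP exP) => l /pboolP [hl hml] hmin.
have adj : adjacent_lengths (sprod z') l (size z').
  have -> : size z' = m.+1 by rewrite /= hm.
  rewrite ez'; split; first lia.
  split => //; split; first by exists z'; split; [split|rewrite /= hm].
  move=> p /andP [h1 h2] hp.
  have : l <= p by apply: hmin; apply/pboolP; split => //; lia.
  lia.
have [xi [[hxi exi] [sxi dxi]]] := hd.1 z' hz' l adj.
have Axi : A \in xi.
  apply: NNPP => /negP hn.
  have := gcd_bound (mem_head A z) hn.
  move: dxi; rewrite /fdist /z' /= eqxx add1n; rewrite geq_max => /andP [_ h1] h2. move: hc h1 h2. set c := count_mem A z. set gg := gcd_size _ _. lia.
have hxi' : factorization_of (rem A xi) B.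
  split; first by move=> U /mem_rem /hxi.
  apply/ffunP=> g; move: exi; rewrite ez' (sprod_perm (perm_to_rem Axi)) sprod_cons.
  move=> /ffunP /(_ g); rewrite !ffunE; exact: addnI.
have := hmax _ hxi'; rewrite size_rem // sxi; lia. Qed.

Lemma hk_add {G : finZmodType} a b (X Y : gseq G) :
  has_k_disjoint_zs a X -> has_k_disjoint_zs b Y -> has_k_disjoint_zs (a + b) (sadd X Y).
Proof. move=> [T1 [h1 [hT1 s1]]] [T2 [h2 [hT2 s2]]]; exists (T1 ++ T2); split; first by rewrite size_cat h1 h2.
split; first by move=> U; rewrite mem_cat => /orP [/hT1|/hT2].
rewrite sprod_cat; exact: ssub_add2. Qed.

Lemma sum_const_seq_le {T : eqType} (s : seq T) (F : T -> nat) c :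
  (forall x, x \in s -> F x <= c) -> \sum_(x <- s) F x <= size s * c.
Proof. elim: s => [|x s IH] h; first by rewrite big_nil.
rewrite big_cons /= mulSn; apply: leq_add; first by apply: h; rewrite inE eqxx.
apply: IH => y hy; apply: h; by rewrite inE hy orbT. Qed.

Theorem proposition6p2 (G Gm : finZmodType) (k dG Dk Dk1 DGm eta : nat) :
  (0 < k)%N ->
  is_succ_dist G dG ->
  is_Dk G k Dk ->
  is_Dk G k.+1 Dk1 ->
  is_Gminus G Gm ->
  is_Dk Gm 1 DGm ->
  is_eta G eta ->
  (dG * expG G * card_atoms G + eta <= k + DGm)%N ->
  Dk1 = (Dk + expG G)%N.
Proof.
move=> k0 hd hDk hDk1 hGm hDm heta hyp.
have DL := Dk_lower k0 hGm hDm hDk.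
have e0 : 0 < expG G := exponent_gt0 _.
set e := expG G in hyp DL e0 *.
have DGm0 : 0 < DGm := Dk_pos (k:=0) hDm.
have kke : k <= k * e by rewrite leq_pmulr.
apply/eqP; rewrite eqn_leq; apply/andP; split.
  apply: upper_bound hDk hDk1 heta _; lia.
have [k' ek] : exists k', k = k'.+1 by exists k.-1; lia.
have hDk' := hDk; rewrite ek in hDk'.
have Dk0 := Dk_pos hDk'.
have [S0 [hS0 nS0]] := Dk_witness hDk'.
set x := (- ssum S0)%R.
set B := sadd S0 (sone x).
have zB : zero_sum B by rewrite /zero_sum ssum_add ssum_sone addrN.
have lB : slen B = slen S0 + 1 by rewrite slen_add slen_sone.
pose P n := pbool (in_lengths B n).
have exP : exists n, P n.
  have [z [hz _]] := fact_exists zB; exists (size z); apply/pboolP; by exists z.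
have ubP : forall n, P n -> n <= slen B.
  move=> n /pboolP [z [hz <-]]; exact: fact_size_le hz.
case: (ex_maxnP exP ubP) => m /pboolP [zeta [hzeta hsm]] hmax.
have hmax' : forall y, factorization_of y B -> size y <= m.
  move=> y hy; apply: hmax; apply/pboolP; by exists y.
have mk : m <= k.
  rewrite leqNgt; apply/negP => hlt; apply: nS0; apply: (@hk_remove _ _ _ x).
  apply: (hk_mono_k (hk_of_fact hzeta)); lia.
set p := fun A : gseq G => e <= slen A.
set zl := filter p zeta.
set zs := filter (predC p) zeta.
have ezeta : sprod zeta = sadd (sprod zl) (sprod zs).
  rewrite -sprod_cat; apply: sprod_perm; by rewrite perm_sym perm_filterC.
have hszs : size zl + size zs = m by rewrite !size_filter count_predC hsm.
have lzs : slen (sprod zs) <= size zs * e.-1.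
  rewrite slen_sprod; apply: sum_const_seq_le => A; rewrite mem_filter /= /p => /andP [h _]; lia.
have lB2 : slen B = slen (sprod zl) + slen (sprod zs) by rewrite -hzeta.2 ezeta slen_add.
have atoms_zl : forall A, A \in zl -> minimal_zero_sum A.
  by move=> A; rewrite mem_filter => /andP [_ /hzeta.1].
have atoms_zs : forall A, A \in zs -> minimal_zero_sum A.
  by move=> A; rewrite mem_filter => /andP [_ /hzeta.1].
have claim : 0 < size zl /\ dG * card_atoms G <= size zl.
  apply: NNPP => hn.
  case: (posnP (size zl)) => hL.
    have : sprod zl = szero by move/size0nil: hL => ->; rewrite sprod_nil.
    move=> ez; rewrite ez slen_szero in lB2.
    have : size zs * e.-1 <= k * e.-1 by apply: leq_mul; lia.
    nia.
  have hLt : (size zl).+1 <= dG * card_atoms G by lia.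
  have hLe : (size zl).+1 * e <= dG * e * card_atoms G.
    by rewrite mulnAC; apply: leq_mul.
  have hC : has_k_disjoint_zs (size zl).+1 (sprod zl).
    apply: (eta_hk heta); rewrite -/e.
    have : size zs * e.-1 <= k * e.-1 by apply: leq_mul; lia.
    nia.
  have hs' : has_k_disjoint_zs (size zs) (sprod zs) by apply: hk_of_fact; split.
  have := hk_add hs' hC.
  have -> : sadd (sprod zs) (sprod zl) = B.
    rewrite -hzeta.2 ezeta; apply/ffunP=> g; rewrite !ffunE addnC; done.
  move=> /(fact_of_hk zB) [y [hy hsy]]; have := hmax' _ hy; lia.
have [A [hAzl hAc]] := atom_pigeon atoms_zl claim.1 claim.2.
move: (hAzl); rewrite mem_filter => /andP [pA hAz].
have hA := hzeta.1 A hAz.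
have cA : dG <= count_mem A zeta.
  apply: leq_trans hAc _; rewrite count_filter; apply: sub_count => y /andP [] //.
have dstep := delta_step hd hzeta hsm hmax' hA cA.
set S' := sadd S0 A.
have nS' : ~ has_k_disjoint_zs k.+1 S'.
  move=> h.
  have zAB : zero_sum (sadd A B).
    by rewrite /zero_sum ssum_add zB; case: hA => _ [-> _]; rewrite addr0.
  have hsub : ssub S' (sadd A B).
    apply/ssubP=> g; rewrite !ffunE; lia.
  have hl : slen S' < slen (sadd A B) by rewrite !slen_add ?slen_sone; lia.
  have [y [hy hsy]] := fact_of_hk zAB (hk_complement zAB h hsub hl).
  have := dstep _ hy; lia.
have : slen S' < Dk1.
  rewrite ltnNge; apply/negP => h; exact: nS' (hDk1.1 _ h).
rewrite slen_add; move: pA; rewrite /p; lia.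
Qed.
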